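(* Let $X,Y\subseteq\mathbb{R}$ with $|X|=|Y|=\mathfrak{c}$ and $|X\setminus Y|=\mathfrak{c}$. Then $$\mathcal{B}_{f_X\oplus f_E^{\mathbb{R}\setminus X}}(\mathbb{R})\neq\mathcal{B}_{f_Y\oplus f_E^{\mathbb{R}\setminus Y}}(\mathbb{R}).$$
   Context: $\mathfrak{c}=|\mathbb{R}|$. For a set $Z$, a two-point selection on $Z$ is a map $f$ from the two-element subsets of $Z$ to $Z$ with $f(F)\in F$; write $r<_f s$ if $f(\{r,s\})=r$, and let $\tau_f$ be the topology on $Z$ generated (as a subbase) by all sets $\{x: x<_f r\}$ and $\{x: r<_f x\}$, $r\in Z$. For $Z\subseteq\mathbb{R}$ with $|Z|=\mathfrak{c}$, $f_Z$ denotes a two-point selection on $Z$ for which $\tau_{f_Z}$ is the discrete topology on $Z$. For $W\subseteq\mathbb{R}$, $f_E^W$ is the Euclidean selection on $W$: $f_E^W(\{r,s\})=\min\{r,s\}$. For a partition $\{P,Q\}$ of $\mathbb{R}$ and selections $f$ on $P$, $g$ on $Q$, the selection $f\oplus g$ on $\mathbb{R}$ is defined by $(f\oplus g)(\{x,y\})=x$ if $x\in P,y\in Q$; $=f(\{x,y\})$ if $x,y\in P$; $=g(\{x,y\})$ if $x,y\in Q$. For a selection $h$ on $\mathbb{R}$, $\mathcal{B}_h(\mathbb{R})$ is the $\sigma$-algebra generated by $\tau_h$. *)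

(* Defs.v *)
From Stdlib Require Import Reals Classical ClassicalEpsilon.
Open Scope R_scope.

Definition has_card_c (Z : R -> Prop) : Prop :=
  exists (g : {x : R | Z x} -> R), (forall a b, g a = g b -> a = b)
                                 /\ (forall y, exists a, g a = y).

(* f : R -> R -> R is a two-point selection on Z: on two-element subsets
   {r,s} of Z (r <> s), f {r,s} = f r s = f s r is an element of {r,s}.
   Values outside of Z are irrelevant. *)
Definition is_selection (Z : R -> Prop) (f : R -> R -> R) : Prop :=
  forall r s, Z r -> Z s -> r <> s -> f r s = f s r /\ (f r s = r \/ f r s = s).

Definition sel_lt (f : R -> R -> R) (r s : R) : Prop := r <> s /\ f r s = r.

Definition sel_subbase (Z : R -> Prop) (f : R -> R -> R) (U : R -> Prop) : Prop :=
  exists r, Z r /\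
   ((forall x, U x <-> (Z x /\ sel_lt f x r)) \/
    (forall x, U x <-> (Z x /\ sel_lt f r x))).

Definition is_topology_on (Z : R -> Prop) (T : (R -> Prop) -> Prop) : Prop :=
  (forall U, T U -> forall x, U x -> Z x) /\
  T Z /\
  (forall U V, T U -> T V -> T (fun x => U x /\ V x)) /\
  (forall F : (R -> Prop) -> Prop, (forall U, F U -> T U) ->
       T (fun x => exists U, F U /\ U x)).

Definition gen_topology (Z : R -> Prop) (S : (R -> Prop) -> Prop) (U : R -> Prop) : Prop :=
  forall T, is_topology_on Z T -> (forall V, S V -> T V) -> T U.

Definition tau (Z : R -> Prop) (f : R -> R -> R) : (R -> Prop) -> Prop :=
  gen_topology Z (sel_subbase Z f).

Definition tau_discrete (Z : R -> Prop) (f : R -> R -> R) : Prop :=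
  forall U : R -> Prop, (forall x, U x -> Z x) -> tau Z f U.

Definition f_E : R -> R -> R := Rmin.

Definition sel_oplus (P : R -> Prop) (f g : R -> R -> R) (x y : R) : R :=
  if excluded_middle_informative (P x) then
    (if excluded_middle_informative (P y) then f x y else x)
  else
    (if excluded_middle_informative (P y) then y else g x y).

Definition fullR : R -> Prop := fun _ => True.

Definition is_sigma_algebra (M : (R -> Prop) -> Prop) : Prop :=
  M fullR /\
  (forall A, M A -> M (fun x => ~ A x)) /\
  (forall A : nat -> R -> Prop, (forall n, M (A n)) -> M (fun x => exists n, A n x)).

Definition gen_sigma (G : (R -> Prop) -> Prop) (A : R -> Prop) : Prop :=
  forall M, is_sigma_algebra M -> (forall U, G U -> M U) -> M A.

Definition Borel_sel (h : R -> R -> R) : (R -> Prop) -> Prop :=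
  gen_sigma (tau fullR h).

(* Main.v *)
Require Import Defs.
From Stdlib Require Import Reals Lra Lia ZArith Classical ClassicalEpsilon FunctionalExtensionality PropExtensionality.
From mathcomp Require Import choice.
Open Scope R_scope.

Inductive code : Type :=
| CE : code
| CB : nat -> nat -> nat -> code
| CC : code -> code
| CU : (nat -> code) -> code.

Fixpoint interp (c : code) : R -> Prop :=
  match c with
  | CE => fun _ => False
  | CB i j n => fun x => (INR i - INR j - 1) / INR (S n) < x /\ x < (INR i - INR j + 1) / INR (S n)
  | CC c => fun x => ~ interp c x
  | CU f => fun x => exists k, interp (f k) x
  end.

Fixpoint enc (c : code) (l : list nat) : nat :=
  match c with
  | CE => 0%nat
  | CB i j n => (3 + pickle (i, j, n))%nat
  | CC c => match l with nil => 1%nat | cons _ l' => enc c l' end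
  | CU f => match l with nil => 2%nat | cons k l' => enc (f k) l' end
  end.

Lemma pickle_inj3 (a b : nat * nat * nat) : pickle a = pickle b -> a = b.
Proof.
  intro H. assert (H2 : @unpickle _ (pickle a) = @unpickle (nat*nat*nat)%type (pickle b)) by (rewrite H; reflexivity).
  rewrite !pickleK in H2. injection H2. auto.
Qed.

Lemma enc_inj c1 : forall c2, (forall l, enc c1 l = enc c2 l) -> c1 = c2.
Proof.
  induction c1 as [|i j n|c IH|f IH]; intros c2 H; destruct c2 as [|i' j' n'|c'|f'];
    try (specialize (H nil); simpl in H; lia).
  - reflexivity.
  - specialize (H nil); simpl in H.
    assert (E : pickle (i,j,n) = pickle (i',j',n')) by lia.
    apply pickle_inj3 in E. injection E; intros; subst; reflexivity.
  - f_equal. apply IH. intro l. exact (H (cons 0%nat l)).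
  - f_equal. apply functional_extensionality. intro k. apply IH. intro l. exact (H (cons k l)).
Qed.

Definition bitsof (F : list nat -> nat) (k : nat) : bool :=
  match @unpickle (list nat * nat)%type k with
  | Some (l, m) => Nat.eqb (F l) m
  | None => false
  end.

Lemma bitsof_inj F G : bitsof F = bitsof G -> forall l, F l = G l.
Proof.
  intros H l. destruct (Nat.eq_dec (F l) (G l)) as [e|ne]; auto.
  exfalso. assert (E := f_equal (fun b => b (pickle (l, F l))) H). simpl in E.
  unfold bitsof in E. rewrite pickleK in E. rewrite Nat.eqb_refl in E.
  symmetry in E. apply Nat.eqb_eq in E. auto.
Qed.

Fixpoint ps (b : nat -> bool) (n : nat) : R :=
  match n with
  | O => 0
  | S m => ps b m + (if b m then 2 / 3 ^ (S m) else 0)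
  end.

Lemma pow3_pos n : 0 < 3 ^ n.
Proof. apply pow_lt; lra. Qed.

Lemma ps_bound b n : 0 <= ps b n <= 1 - 1 / 3 ^ n.
Proof.
  induction n as [|n IH]; simpl.
  - lra.
  - assert (P := pow3_pos n).
    assert (E1 : 2 / (3 * 3 ^ n) = (2/3) * (1 / 3 ^ n)) by (field; lra).
    assert (E2 : 1 / (3 * 3 ^ n) = (1/3) * (1 / 3 ^ n)) by (field; lra).
    assert (Q : 0 < 1 / 3 ^ n) by (apply Rdiv_lt_0_compat; lra).
    rewrite E2. destruct (b n); [rewrite E1|]; lra.
Qed.

Lemma ps_tail b m k : ps b (k + m) <= ps b m + 1 / 3 ^ m - 1 / 3 ^ (k + m).
Proof.
  induction k as [|k IH]; simpl.
  - lra.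
  - assert (P := pow3_pos (k + m)).
    assert (E1 : 2 / (3 * 3 ^ (k+m)) = (2/3) * (1 / 3 ^ (k+m))) by (field; lra).
    assert (E2 : 1 / (3 * 3 ^ (k+m)) = (1/3) * (1 / 3 ^ (k+m))) by (field; lra).
    assert (Q : 0 < 1 / 3 ^ (k+m)) by (apply Rdiv_lt_0_compat; lra).
    rewrite E2. destruct (b (k+m)%nat); [rewrite E1|]; lra.
Qed.

Lemma ps_mono b m k : ps b m <= ps b (k + m).
Proof.
  induction k as [|k IH]; simpl. lra.
  assert (P := pow3_pos (S (k + m))). destruct (b (k+m)%nat).
  - assert (0 < 2 / 3 ^ S (k+m)) by (apply Rdiv_lt_0_compat; lra). simpl in *; lra.
  - lra.
Qed.

Lemma ps_le_all b m n : ps b n <= ps b m + 1 / 3 ^ m.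
Proof.
  assert (P := pow3_pos m). assert (Q : 0 < 1 / 3 ^ m) by (apply Rdiv_lt_0_compat; lra).
  destruct (Compare_dec.le_lt_dec m n) as [h|h].
  - replace n with ((n - m) + m)%nat by lia.
    assert (P2 := pow3_pos ((n-m)+m)).
    assert (Q2 : 0 < 1 / 3 ^ ((n-m)+m)) by (apply Rdiv_lt_0_compat; lra).
    pose proof (ps_tail b m (n - m)). lra.
  - pose proof (ps_mono b n (m - n)) as HH.
    replace (m - n + n)%nat with m in HH by lia. lra.
Qed.

Definition psE (b : nat -> bool) (y : R) : Prop := exists n, y = ps b n.

Lemma psE_bound b : bound (psE b).
Proof. exists 1. intros y [n ->]. pose proof (ps_bound b n). pose proof (pow3_pos n).
  assert (0 < 1 / 3 ^ n) by (apply Rdiv_lt_0_compat; lra). lra. Qed.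

Lemma psE_inh b : exists y, psE b y.
Proof. exists 0, O. reflexivity. Qed.

Definition phi (b : nat -> bool) : R := proj1_sig (completeness (psE b) (psE_bound b) (psE_inh b)).

Lemma phi_ge b n : ps b n <= phi b.
Proof. unfold phi. destruct (completeness _ _ _) as [m [H1 H2]]. simpl. apply H1. exists n; reflexivity. Qed.

Lemma phi_le b m : phi b <= ps b m + 1 / 3 ^ m.
Proof. unfold phi. destruct (completeness _ _ _) as [x [H1 H2]]. simpl. apply H2.
  intros y [n ->]. apply ps_le_all. Qed.

Lemma ps_agree b b' k : (forall i, (i < k)%nat -> b i = b' i) -> ps b k = ps b' k.
Proof.
  induction k as [|k IH]; intros H; simpl. reflexivity.
  rewrite IH by (intros; apply H; lia). rewrite (H k) by lia. reflexivity.
Qed.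

Lemma first_diff (b b' : nat -> bool) n :
  (forall i, (i < n)%nat -> b i = b' i) \/
  exists k, (k < n)%nat /\ (forall i, (i < k)%nat -> b i = b' i) /\ b k <> b' k.
Proof.
  induction n as [|n IH]. left; intros; lia.
  destruct IH as [H|[k [h1 [h2 h3]]]].
  - destruct (Bool.bool_dec (b n) (b' n)) as [e|ne].
    + left. intros i hi. destruct (Nat.eq_dec i n); [subst; auto| apply H; lia].
    + right. exists n. auto.
  - right. exists k. split; [lia|auto].
Qed.

Lemma phi_lt b b' k : (forall i, (i < k)%nat -> b i = b' i) -> b k = true -> b' k = false -> phi b' < phi b.
Proof.
  intros H h1 h2.
  pose proof (phi_ge b (S k)). pose proof (phi_le b' (S k)). simpl in *.
  rewrite h1 in *. rewrite h2 in *. rewrite (ps_agree b b' k H) in *.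
  pose proof (pow3_pos k).
  assert (E1 : 2 / (3 * 3 ^ k) = 2 * (1 / (3 * 3 ^ k))) by (field; lra).
  assert (0 < 1 / (3 * 3 ^ k)) by (apply Rdiv_lt_0_compat; lra). lra.
Qed.

Lemma phi_inj b b' : phi b = phi b' -> b = b'.
Proof.
  intro E. apply functional_extensionality. intro n.
  destruct (first_diff b b' (S n)) as [H|[k [_ [H1 H2]]]].
  - apply H; lia.
  - exfalso. destruct (b k) eqn:e1; destruct (b' k) eqn:e2; try congruence.
    + pose proof (phi_lt b b' k H1 e1 e2). lra.
    + assert (H1' : forall i, (i < k)%nat -> b' i = b i) by (intros; symmetry; auto).
      pose proof (phi_lt b' b k H1' e2 e1). lra.
Qed.
Lemma interval_help D N x y : 0 < N -> D <= x * N < D + 1 -> (D - 1) / N < y < (D + 1) / N ->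
  Rabs (y - x) < 2 / N /\ (D - 1) / N < x < (D + 1) / N.
Proof.
  intros HN Hx Hy.
  assert (u : N * / N = 1) by (field; lra).
  assert (0 < / N) by (apply Rinv_0_lt_compat; lra).
  unfold Rdiv in *.
  assert (x = x * N * / N) by (field; lra).
  split; [apply Rabs_def1|]; nra.
Qed.

Lemma interval_help2 D N x : 0 < N -> D <= x * N < D + 1 ->
  (D - 1) / N < x < (D + 1) / N.
Proof.
  intros HN Hx.
  assert (u : N * / N = 1) by (field; lra).
  assert (0 < / N) by (apply Rinv_0_lt_compat; lra).
  unfold Rdiv in *.
  assert (x = x * N * / N) by (field; lra).
  nra.
Qed.

Lemma tau_sub Z f U : sel_subbase Z f U -> tau Z f U.
Proof. intros H T HT HS. apply HS, H. Qed.

Lemma tau_union Z f F : (forall U, F U -> tau Z f U) -> tau Z f (fun x => exists U, F U /\ U x).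
Proof. intros H T HT HS. pose proof HT as HT'. destruct HT' as [_ [_ [_ HU]]]. apply HU. intros U HFU. apply (H U HFU T); auto. Qed.

Lemma tau_inter Z f U V : tau Z f U -> tau Z f V -> tau Z f (fun x => U x /\ V x).
Proof. intros HU HV T HT HS. destruct HT as [a [b [c d]]]. apply c; [apply HU|apply HV]; auto; repeat split; auto. Qed.

Lemma tau_full Z f : tau Z f Z.
Proof. intros T HT HS. apply HT. Qed.

Lemma set_ext (A B : R -> Prop) : (forall x, A x <-> B x) -> A = B.
Proof. intro H. apply functional_extensionality. intro x. apply propositional_extensionality. auto. Qed.

Lemma sa_inter M A B : is_sigma_algebra M -> M A -> M B -> M (fun x => A x /\ B x).
Proof.
  intros [H1 [H2 H3]] HA HB.
  set (Fm := fun n : nat => match n with O => (fun x => ~ A x) | _ => (fun x => ~ B x) end).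
  assert (HF : forall n, M (Fm n)) by (intros [|n]; simpl; auto).
  pose proof (H2 _ (H3 _ HF)) as HC.
  replace (fun x => A x /\ B x) with (fun x => ~ (exists n, Fm n x)); auto.
  apply set_ext. intro x. split.
  - intro H. split; apply NNPP; intro N; apply H; [exists O| exists 1%nat]; simpl; auto.
  - intros [a b] [[|n] Hn]; simpl in Hn; auto.
Qed.

Lemma gen_sigma_sa G : is_sigma_algebra (gen_sigma G).
Proof.
  split; [|split].
  - intros M HM _. apply HM.
  - intros A HA M HM HG. apply HM. apply HA; auto.
  - intros A HA M HM HG. apply HM. intro n. apply HA; auto.
Qed.

Lemma tau_borel h U : tau fullR h U -> Borel_sel h U.
Proof. intros H M HM HG. apply HG, H. Qed.

Section Sel.
Variable X : R -> Prop.
Variable fX : R -> R -> R.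
Let h := sel_oplus X fX f_E.

Lemma hXX x y : X x -> X y -> h x y = fX x y.
Proof. intros a b. unfold h, sel_oplus. destruct (excluded_middle_informative (X x)); destruct (excluded_middle_informative (X y)); tauto. Qed.
Lemma hXN x y : X x -> ~ X y -> h x y = x.
Proof. intros a b. unfold h, sel_oplus. destruct (excluded_middle_informative (X x)); destruct (excluded_middle_informative (X y)); tauto. Qed.
Lemma hNX x y : ~ X x -> X y -> h x y = y.
Proof. intros a b. unfold h, sel_oplus. destruct (excluded_middle_informative (X x)); destruct (excluded_middle_informative (X y)); tauto. Qed.
Lemma hNN x y : ~ X x -> ~ X y -> h x y = Rmin x y.
Proof. intros a b. unfold h, sel_oplus. destruct (excluded_middle_informative (X x)); destruct (excluded_middle_informative (X y)); tauto. Qed.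

Lemma X_borel : Borel_sel h X.
Proof.
  destruct (classic (exists m, ~ X m /\ forall y, ~ X y -> m <= y)) as [[m [Hm Hmin]]|Hno].
  - apply tau_borel, tau_sub. exists m. split; [exact I|]. left. intro x. split.
    + intro Hx. split; [exact I|]. split; [intro e; subst; auto|]. apply hXN; auto.
    + intros [_ [ne e]]. apply NNPP. intro Hx. rewrite hNN in e by auto.
      pose proof (Hmin x Hx). rewrite Rmin_right in e by auto. auto.
  - set (F := fun V : R -> Prop => exists y, ~ X y /\ forall x, V x <-> sel_lt h y x).
    assert (HU : Borel_sel h (fun x => exists U, F U /\ U x)).
    { apply tau_borel, tau_union. intros U [y [Hy HUy]]. apply tau_sub. exists y. split; [exact I|].
      right. intro x. rewrite HUy. split; [intro; split; auto; exact I| tauto]. }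
    pose proof (proj1 (proj2 (gen_sigma_sa _)) _ HU) as HC.
    replace X with (fun x => ~ exists U, F U /\ U x); auto.
    apply set_ext. intro x. split.
    + intro H. apply NNPP. intro Hx. apply H.
      assert (exists y, ~ X y /\ y < x) as [y [Hy lt]].
      { apply NNPP. intro N. apply Hno. exists x. split; auto. intros y Hy.
        apply Rnot_lt_le. intro l. apply N. exists y; auto. }
      exists (fun z => sel_lt h y z). split.
      * exists y. split; auto. tauto.
      * split; [lra|]. rewrite hNN by auto. apply Rmin_left; lra.
    + intros Hx [U [[y [Hy HUy]] HUx]]. apply HUy in HUx. destruct HUx as [ne e].
      rewrite hNX in e by auto. auto.
Qed.

Lemma subsets_borel : tau_discrete X fX -> forall S, (forall x, S x -> X x) -> Borel_sel h S.
Proof.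
  intros HD S HS.
  set (TX := fun U : R -> Prop => (forall x, U x -> X x) /\
        exists V, tau fullR h V /\ forall x, U x <-> (V x /\ X x)).
  assert (Htop : is_topology_on X TX).
  { split; [|split; [|split]].
    - intros U [H _]. exact H.
    - split; auto. exists fullR. split; [apply tau_full|]. intro; unfold fullR; tauto.
    - intros U V [HU [V1 [T1 E1]]] [HV [V2 [T2 E2]]]. split; [intros x [a b]; auto|].
      exists (fun x => V1 x /\ V2 x). split; [apply tau_inter; auto|].
      intro x. rewrite E1, E2. tauto.
    - intros F HF. split.
      + intros x [U [FU Ux]]. apply (HF U FU); auto.
      + set (G := fun V' : R -> Prop => exists U, F U /\ tau fullR h V' /\ (forall z, U z <-> V' z /\ X z)).
        exists (fun x => exists V', G V' /\ V' x). split.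
        * apply tau_union. intros V' [U [_ [T _]]]. exact T.
        * intro x. split.
          -- intros [U [FU Ux]]. destruct (HF U FU) as [_ [V' [T E]]].
             assert (V' x /\ X x) as [a b] by (apply E; auto).
             split; auto. exists V'. split; auto. exists U. auto.
          -- intros [[V' [[U [FU [T E]]] Vx]] Xx]. exists U. split; auto. apply E; auto. }
  assert (Hsub : forall U, sel_subbase X fX U -> TX U).
  { intros U [r [Xr [HU|HU]]].
    - split; [intros x Ux; apply HU in Ux; tauto|].
      exists (fun x => sel_lt h x r). split.
      + apply tau_sub. exists r. split; [exact I|]. left. intro x. unfold fullR; tauto.
      + intro x. rewrite HU. unfold sel_lt. split.
        * intros [Xx [ne e]]. rewrite hXX by auto. auto.
        * intros [[ne e] Xx]. rewrite hXX in e by auto. auto.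
    - split; [intros x Ux; apply HU in Ux; tauto|].
      exists (fun x => sel_lt h r x). split.
      + apply tau_sub. exists r. split; [exact I|]. right. intro x. unfold fullR; tauto.
      + intro x. rewrite HU. unfold sel_lt. split.
        * intros [Xx [ne e]]. rewrite hXX by auto. auto.
        * intros [[ne e] Xx]. rewrite hXX in e by auto. auto. }
  destruct (HD S HS TX Htop Hsub) as [_ [V [TV EV]]].
  replace S with (fun x => V x /\ X x) by (symmetry; apply set_ext; exact EV).
  apply sa_inter; [apply gen_sigma_sa| apply tau_borel; auto| apply X_borel].
Qed.

End Sel.

Definition Eopen (O : R -> Prop) : Prop :=
  forall x, O x -> exists e, 0 < e /\ forall y, Rabs (y - x) < e -> O y.

Lemma IZR_nat z : IZR z = INR (Z.to_nat z) - INR (Z.to_nat (- z)).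
Proof.
  destruct (Z.le_gt_cases 0 z).
  - replace (Z.to_nat (-z)) with 0%nat by lia. rewrite !INR_IZR_INZ. rewrite Z2Nat.id by lia. simpl. ring.
  - replace (Z.to_nat z) with 0%nat by lia. rewrite !INR_IZR_INZ. rewrite Z2Nat.id by lia.
    rewrite opp_IZR. simpl. ring.
Qed.

Lemma Eopen_code O : Eopen O -> exists c, forall x, interp c x <-> O x.
Proof.
  intro HO.
  exists (CU (fun k => match @unpickle (nat*nat*nat)%type k with
                | Some (i, j, n) => if excluded_middle_informative (forall y, interp (CB i j n) y -> O y)
                                    then CB i j n else CE
                | None => CE end)).
  intro x. split.
  - simpl. intros [k Hk]. destruct (@unpickle (nat*nat*nat)%type k) as [[[i j] n]|]; [|destruct Hk].
    destruct (excluded_middle_informative _) as [Hin|]; [apply Hin; exact Hk| destruct Hk].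
  - intro Ox. destruct (HO x Ox) as [e [He Hball]].
    destruct (archimed_cor1 (e/2)) as [N [HN1 HN2]]; [lra|].
    assert (HNpos : 0 < INR N) by (apply lt_0_INR; lia).
    set (d := (up (x * INR N) - 1)%Z).
    destruct (archimed (x * INR N)) as [a1 a2].
    assert (Hd : IZR d <= x * INR N < IZR d + 1).
    { unfold d. rewrite minus_IZR. simpl. lra. }
    rewrite IZR_nat in Hd.
    set (i := Z.to_nat d) in *. set (j := Z.to_nat (- d)) in *.
    assert (EN : INR (S (N - 1)) = INR N) by (f_equal; lia).
    cbn [interp]. exists (pickle (i, j, (N - 1)%nat)). rewrite pickleK.
    destruct (excluded_middle_informative _) as [Hin|Hnot].
    + cbn [interp]. rewrite EN. pose proof (interval_help (INR i - INR j) (INR N) x x HNpos Hd). exact (interval_help2 _ _ _ HNpos Hd).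
    + exfalso. apply Hnot. intros y Hy. cbn [interp] in Hy. rewrite EN in Hy. apply Hball.
      destruct (interval_help (INR i - INR j) (INR N) x y HNpos Hd Hy) as [A _].
      assert (2 / INR N = 2 * / INR N) by (unfold Rdiv; ring). lra.
Qed.

Section YS.
Variable Y : R -> Prop.
Variable fY : R -> R -> R.
Let h := sel_oplus Y fY f_E.

Definition TY (V : R -> Prop) : Prop := exists O, Eopen O /\ forall x, ~ Y x -> (V x <-> O x).

Lemma TY_top : is_topology_on fullR TY.
Proof.
  split; [|split; [|split]].
  - intros; exact I.
  - exists fullR. split; [intros x _; exists 1; split; [lra|]; intros; exact I|]. tauto.
  - intros U V [O1 [E1 H1]] [O2 [E2 H2]]. exists (fun x => O1 x /\ O2 x). split.
    + intros x [a b]. destruct (E1 x a) as [e1 [p1 q1]]. destruct (E2 x b) as [e2 [p2 q2]].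
      exists (Rmin e1 e2). split; [apply Rmin_pos; auto|]. intros y Hy.
      pose proof (Rmin_l e1 e2). pose proof (Rmin_r e1 e2). split; [apply q1|apply q2]; lra.
    + intros x Hx. rewrite H1, H2 by auto. tauto.
  - intros F HF. exists (fun x => exists V, F V /\ exists O', Eopen O' /\ (forall z, ~ Y z -> (V z <-> O' z)) /\ O' x).
    split.
    + intros x [V [FV [O' [EO [HV Ox]]]]]. destruct (EO x Ox) as [e [pe q]]. exists e. split; auto.
      intros y Hy. exists V. split; auto. exists O'. auto.
    + intros x Hx. split.
      * intros [V [FV Vx]]. destruct (HF V FV) as [O' [EO HV]]. exists V. split; auto. exists O'.
        split; auto. split; auto. apply HV; auto.
      * intros [V [FV [O' [_ [HV Ox]]]]]. exists V. split; auto. apply HV; auto.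
Qed.

Lemma TY_sub U : sel_subbase fullR h U -> TY U.
Proof.
  intros [r [_ [HU|HU]]]; destruct (classic (Y r)) as [Yr|Yr].
  - exists (fun _ => False). split; [intros x []|]. intros x Yx. rewrite HU. unfold sel_lt.
    unfold h. rewrite hNX by auto. split; [intros [_ [a b]]; auto| tauto].
  - exists (fun x => x < r). split.
    + intros x Hx. exists (r - x). split; [lra|]. intros y Hy. apply Rabs_def2 in Hy. lra.
    + intros x Yx. rewrite HU. unfold sel_lt. unfold h. rewrite hNN by auto. split.
      * intros [_ [ne e]]. destruct (Rle_lt_dec x r) as [l|l]; [destruct l; auto; contradiction|].
        rewrite Rmin_right in e by lra. lra.
      * intro l. split; [exact I|]. split; [lra|]. apply Rmin_left; lra.
  - exists fullR. split; [intros x _; exists 1; split; [lra|]; intros; exact I|].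
    intros x Yx. rewrite HU. unfold sel_lt, h. rewrite hXN by auto. unfold fullR.
    split; [tauto|]. intros _. split; [exact I|]. split; auto. intro e; subst; auto.
  - exists (fun x => r < x). split.
    + intros x Hx. exists (x - r). split; [lra|]. intros y Hy. apply Rabs_def2 in Hy. lra.
    + intros x Yx. rewrite HU. unfold sel_lt. unfold h. rewrite hNN by auto. split.
      * intros [_ [ne e]]. destruct (Rle_lt_dec r x) as [l|l]; [destruct l; auto; contradiction|].
        rewrite Rmin_right in e by lra. lra.
      * intro l. split; [exact I|]. split; [lra|]. apply Rmin_left; lra.
Qed.

Definition FY (A : R -> Prop) : Prop := exists c, forall x, ~ Y x -> (A x <-> interp c x).

Lemma FY_sa : is_sigma_algebra FY.
Proof.
  split; [|split].
  - exists (CC CE). intros; simpl; unfold fullR; tauto.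
  - intros A [c Hc]. exists (CC c). intros x Hx. simpl. rewrite Hc by auto. tauto.
  - intros A HA. exists (CU (fun n => proj1_sig (constructive_indefinite_description _ (HA n)))).
    intros x Hx. simpl. split.
    + intros [n Hn]. exists n. destruct (constructive_indefinite_description _ (HA n)) as [c Hc]. simpl.
      apply Hc; auto.
    + intros [n Hn]. exists n. destruct (constructive_indefinite_description _ (HA n)) as [c Hc]. simpl in Hn.
      apply Hc; auto.
Qed.

Lemma BY_FY A : Borel_sel h A -> FY A.
Proof.
  intro HA. apply HA; [apply FY_sa|]. intros U HU.
  destruct (HU TY TY_top TY_sub) as [O [EO HO]].
  destruct (Eopen_code O EO) as [c Hc]. exists c. intros x Hx. rewrite HO by auto. rewrite Hc. tauto.
Qed.
End YS.

Definition psi (c : code) : R := phi (bitsof (enc c)).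

Lemma psi_inj c1 c2 : psi c1 = psi c2 -> c1 = c2.
Proof. intro H. apply phi_inj in H. apply enc_inj. apply bitsof_inj. exact H. Qed.

Theorem lemma3p5 (X Y : R -> Prop) (fX fY : R -> R -> R) :
  has_card_c X -> has_card_c Y ->
  has_card_c (fun x => X x /\ ~ Y x) ->
  is_selection X fX -> tau_discrete X fX ->
  is_selection Y fY -> tau_discrete Y fY ->
  ~ (forall A : R -> Prop,
       Borel_sel (sel_oplus X fX f_E) A <-> Borel_sel (sel_oplus Y fY f_E) A).
Proof.
  intros _ _ [g [ginj gsurj]] _ HDX _ _ Heq.
  set (S := fun x => exists p : X x /\ ~ Y x,
              forall c, g (exist (fun x => X x /\ ~ Y x) x p) = psi c -> ~ interp c x).
  assert (SX : forall x, S x -> X x) by (intros x [p _]; tauto).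
  pose proof (subsets_borel X fX HDX S SX) as HB.
  apply (proj1 (Heq S)) in HB. destruct (BY_FY Y fY S HB) as [c Hc].
  destruct (gsurj (psi c)) as [[z pz] Hz].
  destruct (classic (S z)) as [Sz|nSz].
  - pose proof Sz as [p Hp]. rewrite (Classical_Prop.proof_irrelevance _ p pz) in Hp.
    apply (Hp c Hz). exact (proj1 (Hc z (proj2 pz)) Sz).
  - apply nSz. exists pz. intros c' Hc'. rewrite Hz in Hc'. apply psi_inj in Hc'. subst c'.
    intro I. apply nSz. exact (proj2 (Hc z (proj2 pz)) I).
Qed.
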